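(* Let $D$ be a sqrt-bounded degree function and consider a GSAT maintained under get, insert and delete operations with counter-based rebuilding. Not counting the time of searching inside a node, the amortized cost of an insert, delete or get operation on a key $x$ is $O\!\left(\log_2\frac{m}{ac(x)}\right)$, where $m$ is the current total number of accesses and $ac(x)$ is the current number of accesses to $x$.
   Context: A function $f$ is sqrt-bounded if $f(m)\ge 1$ for all $m$ and there is a constant $M^*$ with $f(m)\le\max(\sqrt m,M^* )$ for all $m$. A Generic Self-Adjusting Tree (GSAT) with degree function $D$ for a set of integer keys $X=\{x_1<\dots<x_n\}$ with access counts $ac_i\ge1$ consists of $m=\sum_i ac_i$, an array of $k\le\lceil D(m)\rceil$ representative keys $x_{i_1}<\dots<x_{i_k}$ with their access counts, and $k+1$ child subtrees that are GSATs for the keys strictly before $x_{i_1}$, strictly between consecutive representatives, and strictly after $x_{i_k}$. For a subtree $T'$, $m(T')$ is the total access count of keys in $T'$. A GSAT is ideal if each child $T_j$ of the root satisfies $m(T_j)\le m/(D(m)+1)$ and each child is ideal. Dynamic operations: each node $v$ (root of subtree $T_v$) has a counter $C(v)$ and a value $im(T_v)$ equal to $m(T_v)$ at the time $T_v$ was last (re)built. An operation get/insert/delete on key $x$ walks down from the root along the search path of $x$, increments $C(v)$ for every visited node and increments the access count of $x$ if found; insert of an absent key creates a new node holding $x$ with access count 1 attached as a child of the last visited node; delete only marks the key. Afterwards, among the visited nodes $v$ with $C(v)>im(T_v)/4$, the one $u$ of minimum depth (if any) is chosen and $T_u$ is rebuilt into an ideal GSAT for its unmarked keys with their current access counts, counters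 set to $0$ and $im$ values reset. Cost of an operation: number of visited nodes plus, if a rebuild happens, $O(m(T_u))$ for rebuilding $T_u$. Here $ac(x)$ refers to the access count of $x$ in the current version of the tree (access counts of keys physically removed at a rebuild are lost). *)

(* Defs.v *)
From Stdlib Require Import Reals ZArith List.
Import ListNotations.
Open Scope R_scope.

Definition sqrt_bounded (D : nat -> R) : Prop :=
  (forall m, 1 <= D m) /\ (exists Mstar : R, forall m, D m <= Rmax (sqrt (INR m)) Mstar).

Definition ceilR (r : R) : Z := (- Int_part (- r))%Z.

Definition log2 (x : R) : R := ln x / ln 2.

Record entry := Entry { ekey : Z; eac : nat; emark : bool }.

(** [Leaf] is the empty subtree.  [Node es cs cnt im]: representatives [es]
    (in increasing key order), children [cs] ([length es + 1] of them),
    counter C(v) = [cnt], and im(T_v) = [im]. *)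
Inductive gsat : Type :=
| Leaf : gsat
| Node : list entry -> list gsat -> nat -> nat -> gsat.

Fixpoint tm (t : gsat) : nat :=
  match t with
  | Leaf => 0%nat
  | Node es cs _ _ => (list_sum (map eac es) + list_sum (map tm cs))%nat
  end.

Definition inorder (es : list entry) (ls : list (list entry)) : list entry :=
  match ls with
  | nil => nil
  | l0 :: ls' => l0 ++ concat (map (fun p => fst p :: snd p) (combine es ls'))
  end.

Fixpoint entries (t : gsat) : list entry :=
  match t with
  | Leaf => nil
  | Node es cs _ _ => inorder es (map entries cs)
  end.

Definition acx (t : gsat) (x : Z) : nat :=
  match find (fun e => Z.eqb (ekey e) x) (entries t) with
  | Some e => eac e
  | None => 0%nat
  end.

(** [fresh_ideal D t]: t is an ideal GSAT w.r.t. D (k <= ceil(D(m)) representatives,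
    k+1 children, each child of weight <= m/(D(m)+1), recursively), with positive
    access counts, no marks, all counters 0 and im = m at every node, i.e. a
    freshly (re)built ideal GSAT.  The key order is imposed separately via
    [entries]. *)
Fixpoint fresh_ideal (D : nat -> R) (t : gsat) : Prop :=
  match t with
  | Leaf => True
  | Node es cs c im =>
      let m := tm (Node es cs c im) in
      c = 0%nat /\ im = m /\
      Forall (fun e => emark e = false /\ (1 <= eac e)%nat) es /\
      (1 <= length es)%nat /\
      (Z.of_nat (length es) <= ceilR (D m))%Z /\
      length cs = S (length es) /\
      Forall (fun ch => INR (tm ch) <= INR m / (D m + 1)) cs /\
      (fix allf (l : list gsat) : Prop :=
         match l with
         | nil => True
         | ch :: l' => fresh_ideal D ch /\ allf l'
         end) cs
  end.

Definition rebuild (D : nat -> R) (t t' : gsat) : Prop :=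
  fresh_ideal D t' /\ entries t' = filter (fun e => negb (emark e)) (entries t).

Inductive op : Type := Get | Insert | Delete.

(** effect of the operation on the entry holding x when x is found;
    [None] = operation not applicable (get/delete of a deleted key) *)
Definition upd (o : op) (e : entry) : option entry :=
  match o with
  | Get => if emark e then None else Some (Entry (ekey e) (S (eac e)) false)
  | Insert => Some (Entry (ekey e) (S (eac e)) false)
  | Delete => if emark e then None else Some (Entry (ekey e) (S (eac e)) true)
  end.

(** No rebuild here. *)
Inductive access (o : op) (x : Z) : gsat -> gsat -> nat -> Prop :=
| acc_new :
    o = Insert ->
    access o x Leaf (Node [Entry x 1 false] [Leaf; Leaf] 0 1) 0
| acc_found : forall es1 e es2 e' cs c im,
    ekey e = x -> upd o e = Some e' ->
    access o x (Node (es1 ++ e :: es2) cs c im)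
                 (Node (es1 ++ e' :: es2) cs (S c) im) 1
| acc_down : forall es cs1 ch cs2 c im ch' v,
    ~ In x (map ekey es) ->
    length cs1 = length (filter (fun e => Z.ltb (ekey e) x) es) ->
    access o x ch ch' v ->
    access o x (Node es (cs1 ++ ch :: cs2) c im)
                 (Node es (cs1 ++ ch' :: cs2) (S c) im) (S v).

(** [opstep D o x t t' cost]: one complete operation, including the rebuild of
    the subtree T_u of the minimum-depth visited node u with C(u) > im(T_u)/4
    (counted after the increment).  cost = visited nodes + m(T_u) if a rebuild
    happens (the O(m(T_u)) rebuild cost, with constant 1). *)
Inductive opstep (D : nat -> R) (o : op) (x : Z) : gsat -> gsat -> nat -> Prop :=
| os_leaf :
    o = Insert ->
    opstep D o x Leaf (Node [Entry x 1 false] [Leaf; Leaf] 0 1) 0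
| os_rebuild : forall es cs c im t1 v t2,
    INR (S c) > INR im / 4 ->
    access o x (Node es cs c im) t1 v ->
    rebuild D t1 t2 ->
    opstep D o x (Node es cs c im) t2 (v + tm t1)
| os_found : forall es1 e es2 e' cs c im,
    ~ (INR (S c) > INR im / 4) ->
    ekey e = x -> upd o e = Some e' ->
    opstep D o x (Node (es1 ++ e :: es2) cs c im)
                   (Node (es1 ++ e' :: es2) cs (S c) im) 1
| os_down : forall es cs1 ch cs2 c im ch' cost,
    ~ (INR (S c) > INR im / 4) ->
    ~ In x (map ekey es) ->
    length cs1 = length (filter (fun e => Z.ltb (ekey e) x) es) ->
    opstep D o x ch ch' cost ->
    opstep D o x (Node es (cs1 ++ ch :: cs2) c im)
                   (Node es (cs1 ++ ch' :: cs2) (S c) im) (S cost).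

(** [exec D t A B]: t is reachable from the empty GSAT by a sequence of
    operations whose total actual cost is A, and B = sum over the operations
    of (1 + log2 (m / ac(x))), where m and ac(x) are the total access count
    and the access count of x right after the access (i.e. m(before)+1 and
    ac_before(x)+1, with ac_before(x) = 0 for a newly inserted key). *)
Inductive exec (D : nat -> R) : gsat -> R -> R -> Prop :=
| exec_nil : exec D Leaf 0 0
| exec_cons : forall t A B o x t' cost,
    exec D t A B ->
    opstep D o x t t' cost ->
    exec D t' (A + INR cost)
              (B + (1 + log2 (INR (S (tm t)) / INR (S (acx t x))))).

(* Main.v *)
Require Import Defs.
From Stdlib Require Import Reals ZArith List Lia Lra Sorting.Sorted.
Import ListNotations.
Open Scope R_scope.

Lemma gsat_ind' (P : gsat -> Prop) :
  P Leaf -> (forall es cs c im, Forall P cs -> P (Node es cs c im)) -> forall t, P t.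
Proof.
  intros HL HN.
  refine (fix F t := match t with Leaf => HL | Node es cs c im => HN es cs c im
   ((fix G l := match l return Forall P l with nil => Forall_nil _
     | ch :: l' => Forall_cons _ (F ch) (G l') end) cs) end).
Qed.

Fixpoint allnodes (P : list entry -> list gsat -> nat -> nat -> Prop) (t : gsat) : Prop :=
  match t with
  | Leaf => True
  | Node es cs c im => P es cs c im /\
      (fix allf (l : list gsat) : Prop :=
         match l with nil => True | ch :: l' => allnodes P ch /\ allf l' end) cs
  end.

Lemma allf_Forall P (l : list gsat) :
  (fix allf (l : list gsat) : Prop :=
         match l with nil => True | ch :: l' => allnodes P ch /\ allf l' end) l
  <-> Forall (allnodes P) l.
Proof.
  induction l; simpl; split; intros H; auto.
  - destruct H as [H1 H2]. constructor; auto. apply IHl; auto.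
  - inversion H; subst. split; auto. apply IHl; auto.
Qed.

Lemma allnodes_Node P es cs c im :
  allnodes P (Node es cs c im) <-> P es cs c im /\ Forall (allnodes P) cs.
Proof. simpl. rewrite allf_Forall. tauto. Qed.

Lemma allf_fresh D (l : list gsat) :
  (fix allf (l : list gsat) : Prop :=
         match l with nil => True | ch :: l' => fresh_ideal D ch /\ allf l' end) l
  <-> Forall (fresh_ideal D) l.
Proof.
  induction l; simpl; split; intros H; auto.
  - destruct H as [H1 H2]. constructor; auto. apply IHl; auto.
  - inversion H; subst. split; auto. apply IHl; auto.
Qed.

Definition getim t := match t with Leaf => 0%nat | Node _ _ _ im => im end.
Definition getc t := match t with Leaf => 0%nat | Node _ _ c _ => c end.

Definition phi (c im : nat) : nat := (10 * c + Nat.min (16 * c) (4 * im - 16 * c))%nat.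

Fixpoint Phi (t : gsat) : nat :=
  match t with Leaf => 0%nat | Node es cs c im => (phi c im + list_sum (map Phi cs))%nat end.

Definition WFn (es : list entry) (cs : list gsat) (c im : nat) : Prop :=
  length cs = S (length es) /\
  (1 <= list_sum (map eac es))%nat /\
  (4 * c <= im)%nat /\
  (tm (Node es cs c im) <= im + c)%nat /\
  (im + 4 * list_sum (map getc cs) <= list_sum (map eac es) + 4 * c + list_sum (map getim cs))%nat /\
  Forall (fun w => 2 * (getim w + getc w) <= im + 2 * c)%nat cs.

Definition W1n (es : list entry) (cs : list gsat) (c im : nat) : Prop :=
  length cs = S (length es).

Lemma allnodes_mono (P Q : list entry -> list gsat -> nat -> nat -> Prop) :
  (forall es cs c im, P es cs c im -> Q es cs c im) -> forall t, allnodes P t -> allnodes Q t.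
Proof.
  intros HPQ t. induction t using gsat_ind'; simpl; auto.
  rewrite !allf_Forall. intros [H1 H2]. split; auto.
  rewrite Forall_forall in *. intros; auto.
Qed.

Definition keys t := map ekey (entries t).
Definition sortedk (l : list entry) := StronglySorted Z.lt (map ekey l).

Lemma list_sum_le_in (f : gsat -> nat) l a : In a l -> (f a <= list_sum (map f l))%nat.
Proof. induction l; simpl; intros H; [contradiction|]. destruct H; subst; [lia|]. specialize (IHl H); lia. Qed.

Lemma list_sum_le_in_e (f : entry -> nat) l a : In a l -> (f a <= list_sum (map f l))%nat.
Proof. induction l; simpl; intros H; [contradiction|]. destruct H; subst; [lia|]. specialize (IHl H); lia. Qed.

Lemma inorder_cons e es l0 l1 ls :
  inorder (e :: es) (l0 :: l1 :: ls) = l0 ++ e :: inorder es (l1 :: ls).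
Proof. reflexivity. Qed.

Fixpoint pre (es : list entry) (ls : list (list entry)) : list entry :=
  match es, ls with
  | e :: es', l0 :: ls' => l0 ++ e :: pre es' ls'
  | _, _ => nil
  end.

Definition post (es : list entry) (ls : list (list entry)) : list entry :=
  concat (map (fun p => fst p :: snd p) (combine es ls)).

Lemma inorder_split es1 ls1 es2 l ls2 :
  length ls1 = length es1 ->
  inorder (es1 ++ es2) (ls1 ++ l :: ls2) = pre es1 ls1 ++ l ++ post es2 ls2.
Proof.
  revert ls1. induction es1 as [|e es1 IH]; intros ls1 Hl.
  - destruct ls1; [|simpl in Hl; discriminate]. reflexivity.
  - destruct ls1 as [|l0 ls1]; [simpl in Hl; discriminate|]. simpl in Hl.
    destruct ls1 as [|l1 ls1].
    + destruct es1; [|simpl in Hl; discriminate].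
      simpl. rewrite <- app_assoc. reflexivity.
    + change ((e :: es1) ++ es2) with (e :: (es1 ++ es2)).
      change ((l0 :: l1 :: ls1) ++ l :: ls2) with (l0 :: l1 :: (ls1 ++ l :: ls2)).
      rewrite inorder_cons.
      change (l1 :: ls1 ++ l :: ls2) with ((l1 :: ls1) ++ l :: ls2).
      rewrite IH by (simpl in *; lia). simpl. rewrite <- app_assoc. reflexivity.
Qed.

Lemma In_inorder a es ls :
  In a (inorder es ls) -> In a es \/ exists l, In l ls /\ In a l.
Proof.
  destruct ls as [|l0 ls]; simpl; [tauto|].
  intros H. apply in_app_or in H. destruct H as [H|H].
  - right. exists l0. auto.
  - apply in_concat in H. destruct H as [x [Hx Ha]].
    apply in_map_iff in Hx. destruct Hx as [[e l] [Hp Hin]]. subst x. simpl in Ha.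
    destruct Ha as [Ha|Ha].
    + left. subst. eapply in_combine_l; eauto.
    + right. exists l. split; auto. right. eapply in_combine_r; eauto.
Qed.

Lemma keys_inorder es es' ls :
  map ekey es = map ekey es' -> map ekey (inorder es ls) = map ekey (inorder es' ls).
Proof.
  destruct ls as [|l0 ls]; [reflexivity|]. simpl. intros H. rewrite !map_app. f_equal.
  revert es' ls H. induction es as [|e es IH]; intros es' ls H.
  - destruct es'; [reflexivity|discriminate].
  - destruct es' as [|e' es']; [discriminate|]. simpl in H. injection H as H1 H2.
    destruct ls as [|l ls]; [reflexivity|]. simpl. rewrite !map_app. simpl. rewrite H1.
    rewrite (IH es' ls H2). reflexivity.
Qed.

Lemma sum_inorder es ls :
  length ls = S (length es) ->
  list_sum (map eac (inorder es ls)) =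
  (list_sum (map eac es) + list_sum (map (fun l => list_sum (map eac l)) ls))%nat.
Proof.
  destruct ls as [|l0 ls]; [simpl; discriminate|]. simpl. intros H. injection H as H.
  rewrite map_app, list_sum_app.
  assert (list_sum (map eac (concat (map (fun p => fst p :: snd p) (combine es ls)))) =
    (list_sum (map eac es) + list_sum (map (fun l => list_sum (map eac l)) ls))%nat); [|lia].
  revert ls H. induction es as [|e es IH]; intros ls H.
  - destruct ls; [reflexivity|discriminate].
  - destruct ls as [|l ls]; [discriminate|]. simpl in H. injection H as H. simpl.
    rewrite map_app, list_sum_app. rewrite IH by auto. lia.
Qed.

Lemma tm_entries t : allnodes W1n t -> tm t = list_sum (map eac (entries t)).
Proof.
  induction t as [|es cs c im IH] using gsat_ind'; [reflexivity|].
  rewrite allnodes_Node. intros [Hl Hall]. unfold W1n in Hl. simpl.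
  rewrite sum_inorder by (rewrite length_map; auto).
  f_equal. rewrite map_map. clear Hl. induction cs as [|ch cs IHc]; [reflexivity|].
  inversion IH; inversion Hall; subst. simpl. rewrite H1 by auto. rewrite IHc; auto.
Qed.

Lemma eac_le_tm t e : In e (entries t) -> (eac e <= tm t)%nat.
Proof.
  induction t as [|es cs c im IH] using gsat_ind'; simpl; [tauto|].
  intros H. apply In_inorder in H. destruct H as [H|[l [Hl He]]].
  - pose proof (list_sum_le_in_e eac es e H). lia.
  - apply in_map_iff in Hl. destruct Hl as [ch [Hch Hin]]. subst l.
    rewrite Forall_forall in IH. specialize (IH ch Hin He).
    pose proof (list_sum_le_in tm cs ch Hin). lia.
Qed.

Lemma acx_le_tm t x : (acx t x <= tm t)%nat.
Proof.
  unfold acx. destruct (find _ _) eqn:E; [|lia].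
  apply find_some in E. apply eac_le_tm. tauto.
Qed.

Lemma SS_app {A} (R : A -> A -> Prop) l1 l2 :
  StronglySorted R (l1 ++ l2) <->
  StronglySorted R l1 /\ StronglySorted R l2 /\ (forall a b, In a l1 -> In b l2 -> R a b).
Proof.
  induction l1 as [|a l1 IH]; simpl.
  - split; [intros H; repeat split; auto; [constructor|tauto] | tauto].
  - split.
    + intros H. apply StronglySorted_inv in H. destruct H as [H1 H2].
      apply IH in H1. destruct H1 as [Ha [Hb Hc]]. rewrite Forall_forall in H2.
      repeat split; auto.
      * constructor; auto. rewrite Forall_forall. intros; apply H2; apply in_or_app; auto.
      * intros a0 b [->|Hin] Hb'; auto. apply H2. apply in_or_app; auto.
    + intros [H1 [H2 H3]]. apply StronglySorted_inv in H1. destruct H1 as [H1 H4].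
      constructor.
      * apply IH. repeat split; auto.
      * rewrite Forall_forall in *. intros y Hy. apply in_app_or in Hy. destruct Hy; auto.
Qed.

Lemma sortedk_app l1 l2 :
  sortedk (l1 ++ l2) <-> sortedk l1 /\ sortedk l2 /\
    (forall a b, In a l1 -> In b l2 -> (ekey a < ekey b)%Z).
Proof.
  unfold sortedk. rewrite map_app, SS_app. split; intros [H1 [H2 H3]]; repeat split; auto.
  - intros a b Ha Hb. apply H3; apply in_map; auto.
  - intros a b Ha Hb. apply in_map_iff in Ha. apply in_map_iff in Hb.
    destruct Ha as [a' [<- Ha]]. destruct Hb as [b' [<- Hb]]. auto.
Qed.

Lemma sortedk_filter p l : sortedk l -> sortedk (filter p l).
Proof.
  unfold sortedk. induction l as [|a l IH]; simpl; auto.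
  intros H. apply StronglySorted_inv in H. destruct H as [H1 H2].
  destruct (p a); simpl; auto. constructor; auto.
  rewrite Forall_forall in *. intros y Hy. apply in_map_iff in Hy.
  destruct Hy as [y' [<- Hy]]. apply filter_In in Hy. apply H2. apply in_map. tauto.
Qed.

Lemma sortedk_single e : sortedk [e].
Proof. unfold sortedk. simpl. constructor; constructor. Qed.

Lemma pre_in es ls e : length ls = length es -> In e es -> In e (pre es ls).
Proof.
  revert ls. induction es as [|e0 es IH]; intros ls Hl H; [contradiction|].
  destruct ls as [|l0 ls]; [discriminate|]. simpl. apply in_or_app. right.
  destruct H as [->|H]; [left; auto| right; apply IH; auto].
Qed.

Lemma post_in es ls e : length ls = length es -> In e es -> In e (post es ls).
Proof.
  unfold post. revert ls. induction es as [|e0 es IH]; intros ls Hl H; [contradiction|].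
  destruct ls as [|l0 ls]; [discriminate|]. simpl.
  destruct H as [->|H]; [left; auto| right; apply in_or_app; right; apply IH; auto].
Qed.

Lemma pre_lt x es ls rest : length ls = length es ->
  sortedk (pre es ls ++ rest) -> (forall e, In e es -> (ekey e < x)%Z) ->
  forall a, In a (pre es ls) -> (ekey a < x)%Z.
Proof.
  revert ls. induction es as [|e es IH]; intros ls Hl Hs He a Ha.
  - destruct ls; simpl in Ha; contradiction.
  - destruct ls as [|l0 ls]; [discriminate|]. simpl in Ha, Hs.
    rewrite <- app_assoc in Hs. apply sortedk_app in Hs. destruct Hs as [_ [Hs Hc]].
    assert (Hex : (ekey e < x)%Z) by (apply He; left; auto).
    apply in_app_or in Ha. destruct Ha as [Ha|[->|Ha]]; auto.
    + specialize (Hc a e Ha (or_introl eq_refl)). lia.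
    + simpl in Hs. unfold sortedk in Hs. simpl in Hs. apply StronglySorted_inv in Hs.
      destruct Hs as [Hs _]. apply (IH ls (ltac:(simpl in Hl; lia)) Hs); auto. intros; apply He; right; auto.
Qed.

Lemma post_gt x es ls : length ls = length es ->
  sortedk (post es ls) -> (forall e, In e es -> (x < ekey e)%Z) ->
  forall a, In a (post es ls) -> (x < ekey a)%Z.
Proof.
  unfold post. destruct es as [|e es]; destruct ls as [|l ls]; simpl; intros Hl Hs He a Ha;
   try contradiction; try discriminate.
  assert (Hx : (x < ekey e)%Z) by (apply He; left; auto).
  destruct Ha as [->|Ha]; auto.
  unfold sortedk in Hs. simpl in Hs. apply StronglySorted_inv in Hs. destruct Hs as [_ Hs].
  rewrite Forall_forall in Hs. specialize (Hs (ekey a) (in_map _ _ _ Ha)). lia.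
Qed.

Lemma filter_all_true {A} (p : A -> bool) l : (forall a, In a l -> p a = true) ->
  length (filter p l) = length l.
Proof. induction l; simpl; intros H; auto. rewrite H by auto. simpl. rewrite IHl; auto. Qed.

Lemma filter_all_false {A} (p : A -> bool) l : (forall a, In a l -> p a = false) ->
  length (filter p l) = 0%nat.
Proof. induction l; simpl; intros H; auto. rewrite H by auto. rewrite IHl; auto. Qed.

Lemma filter_pos {A} (p : A -> bool) l b : In b l -> p b = true -> (1 <= length (filter p l))%nat.
Proof.
  intros Hb Hp. assert (In b (filter p l)) by (apply filter_In; auto).
  destruct (filter p l); simpl in *; [contradiction|lia].
Qed.

Lemma count_arg x es1 es2 :
  (forall a b, In a es1 -> In b es2 -> (ekey a < ekey b)%Z) ->
  ~ In x (map ekey (es1 ++ es2)) ->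
  length (filter (fun e => Z.ltb (ekey e) x) (es1 ++ es2)) = length es1 ->
  (forall a, In a es1 -> (ekey a < x)%Z) /\ (forall b, In b es2 -> (x < ekey b)%Z).
Proof.
  intros Hc Hx Hl. rewrite filter_app, length_app in Hl.
  assert (H2 : forall b, In b es2 -> (x < ekey b)%Z).
  { intros b Hb. destruct (Z.lt_trichotomy x (ekey b)) as [H|[H|H]]; auto.
    - exfalso. apply Hx. rewrite H. apply in_map. apply in_or_app; auto.
    - exfalso.
      rewrite (filter_all_true _ es1) in Hl.
      + pose proof (filter_pos (fun e => Z.ltb (ekey e) x) es2 b Hb). 
        assert ((fun e => Z.ltb (ekey e) x) b = true) by (apply Z.ltb_lt; auto).
        specialize (H0 H1). lia.
      + intros a Ha. apply Z.ltb_lt. specialize (Hc a b Ha Hb). lia. }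
  split; auto.
  rewrite (filter_all_false _ es2) in Hl.
  - rewrite Nat.add_0_r in Hl. apply filter_length_forallb in Hl.
    rewrite forallb_forall in Hl. intros a Ha. apply Z.ltb_lt. auto.
  - intros b Hb. apply Z.ltb_ge. specialize (H2 b Hb). lia.
Qed.

Lemma down_split es cs1 ch cs2 c im x :
  length (cs1 ++ ch :: cs2) = S (length es) -> ~ In x (map ekey es) ->
  length cs1 = length (filter (fun e => Z.ltb (ekey e) x) es) ->
  sortedk (entries (Node es (cs1 ++ ch :: cs2) c im)) ->
  exists EA ER,
    (forall ch0 c0 im0, entries (Node es (cs1 ++ ch0 :: cs2) c0 im0) = EA ++ entries ch0 ++ ER) /\
    (forall a, In a EA -> (ekey a < x)%Z) /\ (forall a, In a ER -> (x < ekey a)%Z).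
Proof.
  intros Hlen Hx Hcnt Hs.
  pose proof (filter_length_le (fun e => Z.ltb (ekey e) x) es) as Hle.
  set (n := length cs1) in *.
  set (es1 := firstn n es). set (es2 := skipn n es).
  assert (Hes : es = es1 ++ es2) by (symmetry; apply firstn_skipn).
  assert (Hl1 : length es1 = n) by (apply firstn_length_le; lia).
  assert (Hl2 : length es2 = length cs2).
  { rewrite length_app in Hlen. simpl in Hlen. rewrite Hes, length_app in Hlen. unfold n in *. lia. }
  assert (Hent : forall ch0 c0 im0, entries (Node es (cs1 ++ ch0 :: cs2) c0 im0) =
     pre es1 (map entries cs1) ++ entries ch0 ++ post es2 (map entries cs2)).
  { intros. simpl. rewrite map_app. simpl. rewrite Hes. apply inorder_split.
    rewrite length_map. auto. }
  exists (pre es1 (map entries cs1)), (post es2 (map entries cs2)).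
  split; [exact Hent|].
  rewrite Hent in Hs. pose proof Hs as Hs0. apply sortedk_app in Hs.
  destruct Hs as [HA [HR Hc]]. apply sortedk_app in HR. destruct HR as [_ [HR _]].
  assert (Hk : (forall a, In a es1 -> (ekey a < x)%Z) /\ (forall b, In b es2 -> (x < ekey b)%Z)).
  { apply count_arg.
    - intros a b Ha Hb. apply Hc.
      + apply pre_in; auto. rewrite length_map; auto.
      + apply in_or_app. right. apply post_in; auto. rewrite length_map; auto.
    - rewrite <- Hes. auto.
    - rewrite <- Hes, Hl1. auto. }
  destruct Hk as [Hk1 Hk2]. split.
  - eapply pre_lt; eauto. rewrite length_map; auto.
  - eapply post_gt; eauto. rewrite length_map; auto.
Qed.

Lemma find_app {A} (f : A -> bool) l1 l2 :
  find f (l1 ++ l2) = match find f l1 with Some a => Some a | None => find f l2 end.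
Proof. induction l1; simpl; auto. destruct (f a); auto. Qed.

Lemma find_none_all {A} (f : A -> bool) l : (forall a, In a l -> f a = false) -> find f l = None.
Proof. induction l; simpl; intros H; auto. rewrite H by auto. auto. Qed.

Lemma acx_split EA ER E x :
  (forall a, In a EA -> (ekey a < x)%Z) -> (forall a, In a ER -> (x < ekey a)%Z) ->
  match find (fun e => Z.eqb (ekey e) x) (EA ++ E ++ ER) with Some e => eac e | None => 0%nat end
  = match find (fun e => Z.eqb (ekey e) x) E with Some e => eac e | None => 0%nat end.
Proof.
  intros HA HR. rewrite !find_app.
  rewrite find_none_all by (intros a Ha; apply Z.eqb_neq; specialize (HA a Ha); lia).
  destruct (find _ E); auto.
  rewrite find_none_all by (intros a Ha; apply Z.eqb_neq; specialize (HR a Ha); lia). auto.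
Qed.

Lemma sorted_replace EA E E' ER x :
  (forall a, In a EA -> (ekey a < x)%Z) -> (forall a, In a ER -> (x < ekey a)%Z) ->
  sortedk (EA ++ E ++ ER) -> sortedk E' ->
  (forall k, In k (map ekey E') -> In k (map ekey E) \/ k = x) ->
  sortedk (EA ++ E' ++ ER) /\ sortedk E.
Proof.
  intros HA HR Hs Hs' Hk.
  apply sortedk_app in Hs. destruct Hs as [HsA [HsER Hc1]].
  apply sortedk_app in HsER. destruct HsER as [HsE [HsR Hc2]].
  split; auto.
  apply sortedk_app. split; auto. split.
  - apply sortedk_app. split; auto. split; auto.
    intros a b Ha Hb. specialize (Hk (ekey a) (in_map _ _ _ Ha)).
    destruct Hk as [Hk|Hk].
    + apply in_map_iff in Hk. destruct Hk as [a' [Ha' Hin]]. rewrite <- Ha'. auto.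
    + rewrite Hk. apply HR; auto.
  - intros a b Ha Hb. apply in_app_or in Hb. destruct Hb as [Hb|Hb].
    + specialize (Hk (ekey b) (in_map _ _ _ Hb)). destruct Hk as [Hk|Hk].
      * apply in_map_iff in Hk. destruct Hk as [b' [Hb' Hin]]. rewrite <- Hb'.
        apply Hc1; auto. apply in_or_app; auto.
      * rewrite Hk. auto.
    + apply Hc1; auto. apply in_or_app; auto.
Qed.

Lemma upd_spec o e e' : upd o e = Some e' -> ekey e' = ekey e /\ eac e' = S (eac e).
Proof.
  destruct o; simpl; [destruct (emark e)| |destruct (emark e)]; intros H; try discriminate;
    injection H as <-; simpl; auto.
Qed.

Lemma sum_split {A} (f : A -> nat) l1 a l2 :
  list_sum (map f (l1 ++ a :: l2)) = (list_sum (map f l1) + f a + list_sum (map f l2))%nat.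
Proof. rewrite map_app, list_sum_app. simpl. lia. Qed.

Lemma keys_replace EA E E' ER x :
  (forall k, In k (map ekey E') -> In k (map ekey E) \/ k = x) ->
  forall k, In k (map ekey (EA ++ E' ++ ER)) -> In k (map ekey (EA ++ E ++ ER)) \/ k = x.
Proof.
  intros H k Hk. rewrite !map_app in *. apply in_app_or in Hk. destruct Hk as [Hk|Hk].
  - left. apply in_or_app; auto.
  - apply in_app_or in Hk. destruct Hk as [Hk|Hk].
    + destruct (H k Hk); auto. left. apply in_or_app; right; apply in_or_app; auto.
    + left. apply in_or_app; right; apply in_or_app; auto.
Qed.

Lemma Forall_replace {A} (P : A -> Prop) l1 a a' l2 :
  Forall P (l1 ++ a :: l2) -> P a' -> Forall P (l1 ++ a' :: l2).
Proof.
  rewrite !Forall_app. intros [H1 H2] H. inversion H2; subst. split; auto.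
Qed.

Lemma Forall_mid {A} (P : A -> Prop) l1 a l2 : Forall P (l1 ++ a :: l2) -> P a.
Proof. rewrite Forall_app. intros [_ H]. inversion H; auto. Qed.

Lemma W_W1 t : allnodes WFn t -> allnodes W1n t.
Proof. apply allnodes_mono. unfold WFn, W1n. tauto. Qed.

Lemma found_keys es1 e e' es2 cs c im c' im' :
  ekey e' = ekey e ->
  keys (Node (es1 ++ e' :: es2) cs c' im') = keys (Node (es1 ++ e :: es2) cs c im).
Proof.
  intros H. unfold keys. simpl. apply keys_inorder. rewrite !map_app. simpl. rewrite H. auto.
Qed.

Lemma access_lemma o x t t1 v : access o x t t1 v -> allnodes WFn t -> sortedk (entries t) ->
  allnodes W1n t1 /\ sortedk (entries t1) /\
  (forall k, In k (keys t1) -> In k (keys t) \/ k = x) /\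
  (tm t1 <= tm t + 1)%nat /\ (v <= tm t1)%nat.
Proof.
  induction 1 as [Ho | es1 e es2 e' cs c im Hk Hu
                 | es cs1 ch cs2 c im ch' v Hx Hcnt Hacc IH].
  - intros _ _. simpl. repeat split; auto.
    + apply sortedk_single.
    + intros k [Hk|[]]. right; auto.
  - intros HW Hs. apply allnodes_Node in HW. destruct HW as [[Hl _] Hall].
    apply upd_spec in Hu. destruct Hu as [Hk' Hac].
    assert (Hkeys := found_keys es1 e e' es2 cs c im (S c) im Hk').
    split; [|split; [|split; [|split]]].
    + apply allnodes_Node. split.
      * unfold W1n. rewrite Hl, !length_app. simpl. auto.
      * rewrite Forall_forall in *. intros; apply W_W1; auto.
    + unfold sortedk. fold (keys (Node (es1 ++ e' :: es2) cs (S c) im)). rewrite Hkeys. exact Hs.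
    + rewrite Hkeys. auto.
    + simpl. rewrite !sum_split. lia.
    + simpl. rewrite !sum_split. lia.
  - intros HW Hs. apply allnodes_Node in HW. destruct HW as [HWn Hall].
    pose proof HWn as [Hl [Hr _]].
    destruct (down_split es cs1 ch cs2 c im x Hl Hx Hcnt Hs) as [EA [ER [Hent [HA HR]]]].
    rewrite Hent in Hs.
    assert (HsE : sortedk (entries ch)).
    { apply sortedk_app in Hs. destruct Hs as [_ [Hs _]]. apply sortedk_app in Hs. tauto. }
    destruct (IH (Forall_mid _ _ _ _ Hall) HsE) as [H1 [H2 [H3 [H4 H5]]]].
    split; [|split; [|split; [|split]]].
    + apply allnodes_Node. split.
      * unfold W1n. rewrite <- Hl, !length_app. simpl. auto.
      * apply Forall_replace with (a := ch); auto.
        rewrite Forall_forall in *. intros; apply W_W1; auto.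
    + rewrite Hent. exact (proj1 (sorted_replace EA _ _ ER x HA HR Hs H2 H3)).
    + unfold keys. rewrite !Hent. apply keys_replace. exact H3.
    + simpl. rewrite !sum_split. lia.
    + simpl. rewrite !sum_split. lia.
Qed.

Lemma real_half a m d : 1 <= d -> INR a <= INR m / (d + 1) -> (2 * a <= m)%nat.
Proof.
  intros Hd H. apply INR_le. rewrite mult_INR. simpl.
  pose proof (pos_INR m). pose proof (pos_INR a).
  assert (INR m / (d + 1) <= INR m / 2).
  { unfold Rdiv. apply Rmult_le_compat_l; auto. apply Rinv_le_contravar; lra. }
  lra.
Qed.

Lemma sum_pos_es es : es <> nil -> Forall (fun e => (1 <= eac e)%nat) es -> (1 <= list_sum (map eac es))%nat.
Proof. destruct es as [|e es]; [tauto|]. intros _ H. inversion H; subst. simpl. lia. Qed.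

Lemma sum_zero {A} (f : A -> nat) l : Forall (fun a => f a = 0%nat) l -> list_sum (map f l) = 0%nat.
Proof. induction 1; simpl; auto. lia. Qed.

Lemma map_eq_Forall {A B} (f g : A -> B) l : Forall (fun a => f a = g a) l -> map f l = map g l.
Proof. induction 1; simpl; auto. f_equal; auto. Qed.

Lemma fresh_lemma D t : (forall m, 1 <= D m) -> fresh_ideal D t ->
  allnodes WFn t /\ Phi t = 0%nat /\ getc t = 0%nat /\ getim t = tm t.
Proof.
  intros HD. induction t as [|es cs c im IH] using gsat_ind'.
  - intros _. simpl. auto.
  - intros Hf. simpl in Hf.
    destruct Hf as [Hc [Him [Hes [Hlen [_ [Hlcs [Hw Hall]]]]]]].
    apply allf_fresh in Hall.
    assert (IH' : Forall (fun ch => allnodes WFn ch /\ Phi ch = 0%nat /\ getc ch = 0%nat /\ getim ch = tm ch) cs).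
    { rewrite Forall_forall in *. intros; auto. }
    assert (Hsc : list_sum (map getc cs) = 0%nat).
    { apply sum_zero. rewrite Forall_forall in *. intros ch H; apply IH'; auto. }
    assert (Hsp : list_sum (map Phi cs) = 0%nat).
    { apply sum_zero. rewrite Forall_forall in *. intros ch H; apply IH'; auto. }
    assert (Hsi : map getim cs = map tm cs).
    { apply map_eq_Forall. rewrite Forall_forall in *. intros ch H; apply IH'; auto. }
    subst c. split; [|split; [|split]].
    + apply allnodes_Node. split.
      * unfold WFn. split; [auto|]. split.
        { apply sum_pos_es.
          - destruct es; simpl in Hlen; [lia|discriminate].
          - rewrite Forall_forall in *. intros e He; apply Hes; auto. }
        split; [lia|]. split; [rewrite Him; simpl; lia|]. split.
        { rewrite Hsc, Hsi, Him. simpl. lia. }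
        rewrite Forall_forall in *. intros w Hwin.
        destruct (IH' w Hwin) as [_ [_ [Hc0 Hi0]]]. rewrite Hc0, Hi0.
        specialize (Hw w Hwin). rewrite <- Him in Hw.
        pose proof (real_half (tm w) im (D im) (HD im) Hw). lia.
      * rewrite Forall_forall in *. intros ch H; apply IH'; auto.
    + simpl. rewrite Hsp. unfold phi. lia.
    + reflexivity.
    + simpl. rewrite Him. reflexivity.
Qed.

Lemma sum_le3 (f g h : gsat -> nat) l : Forall (fun w => f w <= g w + 4 * h w)%nat l ->
  (list_sum (map f l) <= list_sum (map g l) + 4 * list_sum (map h l))%nat.
Proof. induction 1; simpl; lia. Qed.

Lemma slack t : allnodes WFn t -> (getim t <= tm t + 4 * getc t)%nat.
Proof.
  induction t as [|es cs c im IH] using gsat_ind'; simpl; [lia|].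
  rewrite allf_Forall. intros [[_ [_ [_ [_ [H5 _]]]]] Hall].
  assert (Forall (fun w => getim w <= tm w + 4 * getc w)%nat cs).
  { rewrite Forall_forall in *. intros; auto. }
  pose proof (sum_le3 getim tm getc cs H). lia.
Qed.

Lemma trig_pos c im : INR (S c) > INR im / 4 -> (im < 4 * S c)%nat.
Proof.
  intros H. apply INR_lt. rewrite mult_INR. simpl (INR 4). lra.
Qed.

Lemma trig_neg c im : ~ (INR (S c) > INR im / 4) -> (4 * S c <= im)%nat.
Proof.
  intros H. apply INR_le. rewrite mult_INR. simpl (INR 4). lra.
Qed.

Lemma sum_filter_le (p : entry -> bool) l :
  (list_sum (map eac (filter p l)) <= list_sum (map eac l))%nat.
Proof. induction l; simpl; auto. destruct (p a); simpl; lia. Qed.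

Definition G t := (getim t + getc t)%nat.
Definition Mx t x := Nat.max 1 (acx t x).
Definition nbound t x n := match n with 0%nat => True
  | S k => (4 * 4^k * Mx t x <= 9 * 3^k * tm t /\ 4^k * Mx t x <= 3^k * G t)%nat end.

Lemma Forall_weaken {A} (P Q : A -> Prop) l : (forall a, P a -> Q a) -> Forall P l -> Forall Q l.
Proof. intros H. induction 1; constructor; auto. Qed.

Lemma step D o x t t' cost : (forall m, 1 <= D m) -> opstep D o x t t' cost ->
  allnodes WFn t -> sortedk (entries t) ->
  allnodes WFn t' /\ sortedk (entries t') /\
  (forall k, In k (keys t') -> In k (keys t) \/ k = x) /\ (tm t' <= tm t + 1)%nat /\
  (4 * getc t' + getim t <= 4 * getc t + 4 + getim t')%nat /\
  (getim t' + getc t' <= getim t + getc t + 1)%nat /\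
  exists n, (cost + Phi t' <= Phi t + 30 * (n + 1))%nat /\ nbound t x n.
Proof.
  intros HD. induction 1 as [Ho | es cs c im t1 v t2 Htr Hacc Hreb
     | es1 e es2 e' cs c im Hnt Hk Hu | es cs1 ch cs2 c im ch' cost Hnt Hx Hcnt Hst IH].
  -
    intros _ _. split; [|split; [|split; [|split; [|split; [|split]]]]].
    + apply allnodes_Node. split.
      * unfold WFn. simpl. repeat split; try lia. repeat constructor; simpl; lia.
      * repeat constructor.
    + apply sortedk_single.
    + intros k [Hk|[]]. right; auto.
    + simpl; lia.
    + simpl; lia.
    + simpl; lia.
    + exists 0%nat. split; [|exact I]. simpl. unfold phi. simpl. lia.
  -
    intros HW Hs. pose proof HW as HW0.
    apply allnodes_Node in HW. destruct HW as [[Hl [Hr [H4c [Htm _]]]] Hall].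
    destruct (access_lemma _ _ _ _ _ Hacc HW0 Hs) as [A1 [A2 [A3 [A4 A5]]]].
    destruct Hreb as [Hf He].
    destruct (fresh_lemma D t2 HD Hf) as [F1 [F2 [F3 F4]]].
    assert (Htm2 : (tm t2 <= tm t1)%nat).
    { rewrite (tm_entries t2 (W_W1 _ F1)), (tm_entries t1 A1), He. apply sum_filter_le. }
    pose proof (trig_pos _ _ Htr) as Htp.
    split; [|split; [|split; [|split; [|split; [|split]]]]].
    + exact F1.
    + rewrite He. apply sortedk_filter. auto.
    + intros k Hk. apply A3. unfold keys in *. rewrite He in Hk.
      apply in_map_iff in Hk. destruct Hk as [e [<- Hin]]. apply filter_In in Hin.
      apply in_map. tauto.
    + lia.
    + rewrite F3. simpl. lia.
    + rewrite F3, F4. simpl in *. lia.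
    + exists 0%nat. split; [|exact I]. rewrite F2. change (Phi (Node es cs c im)) with (phi c im + list_sum (map Phi cs))%nat. unfold phi. lia.
  -
    intros HW Hs. pose proof HW as HW0.
    apply allnodes_Node in HW. destruct HW as [[Hl [Hr [H4c [Htm [H5 H6]]]]] Hall].
    pose proof (upd_spec _ _ _ Hu) as [Hk' Hac].
    pose proof (trig_neg _ _ Hnt) as Htn.
    assert (Hkeys := found_keys es1 e e' es2 cs c im (S c) im Hk').
    simpl in Htm. rewrite sum_split in Hr, Htm, H5.
    split; [|split; [|split; [|split; [|split; [|split]]]]].
    + apply allnodes_Node. split; auto.
      unfold WFn. rewrite !length_app in *. simpl in *. rewrite !sum_split.
      split; [lia|]. split; [lia|]. split; [lia|]. split; [lia|]. split; [lia|].
      eapply Forall_weaken; [|exact H6]. simpl. intros; lia.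
    + unfold sortedk. fold (keys (Node (es1 ++ e' :: es2) cs (S c) im)). rewrite Hkeys. exact Hs.
    + rewrite Hkeys. auto.
    + simpl. rewrite !sum_split. lia.
    + simpl. lia.
    + simpl. lia.
    + exists 0%nat. split; [|exact I].
      change (Phi (Node (es1 ++ e' :: es2) cs (S c) im)) with (phi (S c) im + list_sum (map Phi cs))%nat.
      change (Phi (Node (es1 ++ e :: es2) cs c im)) with (phi c im + list_sum (map Phi cs))%nat.
      unfold phi. lia.
  -
    intros HW Hs. pose proof HW as HW0.
    apply allnodes_Node in HW. destruct HW as [HWn Hall].
    pose proof HWn as [Hl [Hr [H4c [Htm [H5 H6]]]]].
    pose proof (trig_neg _ _ Hnt) as Htn.
    destruct (down_split es cs1 ch cs2 c im x Hl Hx Hcnt Hs) as [EA [ER [Hent [HA HR]]]].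
    assert (Hs2 := Hs). rewrite Hent in Hs2.
    assert (HsE : sortedk (entries ch)).
    { apply sortedk_app in Hs2. destruct Hs2 as [_ [Hs3 _]]. apply sortedk_app in Hs3. tauto. }
    pose proof (Forall_mid _ _ _ _ Hall) as HWch.
    destruct (IH HWch HsE) as [I1 [I2 [I3 [I4 [I5 [I6 [nc [I7 I8]]]]]]]].
    pose proof (Forall_mid _ _ _ _ H6) as H6ch. simpl in H6ch.
    pose proof (slack _ HW0) as Hsl. simpl getim in Hsl. simpl getc in Hsl.
    assert (Hacx : acx (Node es (cs1 ++ ch :: cs2) c im) x = acx ch x).
    { unfold acx. rewrite Hent. apply acx_split; auto. }
    assert (HtmT : tm (Node es (cs1 ++ ch :: cs2) c im) =
       (list_sum (map eac es) + list_sum (map tm cs1) + tm ch + list_sum (map tm cs2))%nat).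
    { simpl. rewrite sum_split. lia. }
    assert (HtmT' : tm (Node es (cs1 ++ ch' :: cs2) (S c) im) =
       (list_sum (map eac es) + list_sum (map tm cs1) + tm ch' + list_sum (map tm cs2))%nat).
    { simpl. rewrite sum_split. lia. }
    rewrite HtmT in Htm, Hsl.
    rewrite !sum_split in H5.
    split; [|split; [|split; [|split; [|split; [|split]]]]].
    + apply allnodes_Node. split.
      * unfold WFn. rewrite !length_app in *. simpl in *. rewrite !sum_split.
        split; [lia|]. split; [lia|]. split; [lia|]. split; [lia|]. split; [lia|].
        apply Forall_replace with (a := ch); [|simpl; lia].
        eapply Forall_weaken; [|exact H6]. simpl. intros; lia.
      * apply Forall_replace with (a := ch); auto.
    + rewrite Hent. exact (proj1 (sorted_replace EA _ _ ER x HA HR Hs2 I2 I3)).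
    + unfold keys. rewrite !Hent. apply keys_replace. exact I3.
    + rewrite HtmT, HtmT'. lia.
    + simpl. lia.
    + simpl. lia.
    + assert (HM : Mx (Node es (cs1 ++ ch :: cs2) c im) x = Mx ch x) by (unfold Mx; rewrite Hacx; auto).
      assert (Hgch : (4 * G ch <= 3 * G (Node es (cs1 ++ ch :: cs2) c im))%nat) by (unfold G; simpl; lia).
      assert (Hgch2 : (G ch <= G (Node es (cs1 ++ ch :: cs2) c im))%nat) by lia.
      assert (Htch : (tm ch <= tm (Node es (cs1 ++ ch :: cs2) c im))%nat) by (rewrite HtmT; lia).
      assert (HPhi : forall c0 ch0, Phi (Node es (cs1 ++ ch0 :: cs2) c0 im) =
        (phi c0 im + list_sum (map Phi cs1) + Phi ch0 + list_sum (map Phi cs2))%nat).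
      { intros. simpl. rewrite sum_split. lia. }
      assert (HMt : (Mx ch x <= tm (Node es (cs1 ++ ch :: cs2) c im))%nat).
      { rewrite <- HM. unfold Mx. pose proof (acx_le_tm (Node es (cs1 ++ ch :: cs2) c im) x).
        rewrite HtmT in *. lia. }
      assert (HGt : (tm (Node es (cs1 ++ ch :: cs2) c im) <= G (Node es (cs1 ++ ch :: cs2) c im))%nat).
      { rewrite HtmT. unfold G. simpl. lia. }
      rewrite !HPhi.
      destruct (le_lt_dec (8 * c) im) as [Hgood|Hbad].
      * exists (S nc). split; [unfold phi in *; lia|].
        assert (Hg9 : (4 * G (Node es (cs1 ++ ch :: cs2) c im) <= 9 * tm (Node es (cs1 ++ ch :: cs2) c im))%nat).
        { unfold G. rewrite HtmT. simpl. lia. }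
        cbn [nbound]. rewrite HM in *.
        destruct nc as [|k].
        { rewrite !Nat.pow_0_r. split; lia. }
        cbn [nbound] in I8. destruct I8 as [I8a I8b].
        rewrite !Nat.pow_succ_r'.
        set (P := (4 ^ k * Mx ch x)%nat) in *. set (Q := (3 ^ k)%nat) in *.
        set (Gt := G (Node es (cs1 ++ ch :: cs2) c im)) in *.
        set (Tt := tm (Node es (cs1 ++ ch :: cs2) c im)) in *.
        assert (E1 : (4 * (4 ^ k) * Mx ch x = 4 * P)%nat) by (unfold P; lia).
        assert (E2 : (4 * (4 * 4 ^ k) * Mx ch x = 16 * P)%nat) by (unfold P; lia).
        assert (E3 : (4 * 4 ^ k * Mx ch x = 4 * P)%nat) by (unfold P; lia).
        rewrite E2, E3.
        assert (Q * (4 * G ch) <= Q * (3 * Gt))%nat by (apply Nat.mul_le_mono_l; auto).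
        assert (Q * (4 * Gt) <= Q * (9 * Tt))%nat by (apply Nat.mul_le_mono_l; auto).
        split; nia.
      * exists nc. split; [unfold phi in *; lia|].
        destruct nc as [|k]; [exact I|].
        cbn [nbound] in *. rewrite HM. destruct I8 as [I8a I8b].
        assert (3 ^ k * tm ch <= 3 ^ k * tm (Node es (cs1 ++ ch :: cs2) c im))%nat by (apply Nat.mul_le_mono_l; auto).
        assert (3 ^ k * G ch <= 3 ^ k * G (Node es (cs1 ++ ch :: cs2) c im))%nat by (apply Nat.mul_le_mono_l; auto).
        split; lia.
Qed.

Lemma ln_le' x y : 0 < x -> x <= y -> ln x <= ln y.
Proof.
  intros Hx Hxy. destruct (Rle_lt_or_eq_dec x y Hxy) as [H|H].
  - left. apply ln_increasing; auto.
  - subst; right; auto.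
Qed.

Lemma real_bound n m a : (a <= m)%nat ->
  (n = 0%nat \/ exists k, n = S k /\ (4 * 4^k * Nat.max 1 a <= 9 * 3^k * m)%nat) ->
  INR (n + 1) <= 10 * (1 + log2 (INR (S m) / INR (S a))).
Proof.
  intros Ham Hn.
  pose proof (lt_0_INR (S a) (Nat.lt_0_succ a)) as HA.
  pose proof (lt_0_INR (S m) (Nat.lt_0_succ m)) as HM.
  assert (HAM : INR (S a) <= INR (S m)) by (apply le_INR; lia).
  assert (Hl2 : 0 < ln 2) by (rewrite <- ln_1; apply ln_increasing; lra).
  assert (HlnR : ln (INR (S m) / INR (S a)) = ln (INR (S m)) - ln (INR (S a))).
  { unfold Rdiv. rewrite ln_mult, ln_Rinv; try lra. apply Rinv_0_lt_compat; auto. }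
  assert (HD0 : ln (INR (S a)) <= ln (INR (S m))) by (apply ln_le'; auto).
  set (L := log2 (INR (S m) / INR (S a))).
  assert (HL : L * ln 2 = ln (INR (S m)) - ln (INR (S a))).
  { unfold L, log2. rewrite HlnR. field. lra. }
  assert (HL0 : 0 <= L).
  { apply Rmult_le_reg_r with (ln 2); auto. lra. }
  destruct Hn as [->|[k [-> Hk]]].
  - simpl. lra.
  - assert (Hnat : (4^k * (2 * S a) <= 9 * 3^k * S m)%nat).
    { assert (4^k * (2 * S a) <= 4^k * (4 * Nat.max 1 a))%nat by (apply Nat.mul_le_mono_l; lia).
      assert (9 * 3^k * m <= 9 * 3^k * S m)%nat by (apply Nat.mul_le_mono_l; lia).
      lia. }
    apply le_INR in Hnat. rewrite !mult_INR, !pow_INR in Hnat.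
    assert (E2 : INR 2 = 2) by (simpl; lra). assert (E3 : INR 3 = 3) by (simpl; lra).
    assert (E4 : INR 4 = 4) by (simpl; lra). assert (E9 : INR 9 = 9) by (simpl; lra).
    rewrite E2, E3, E4, E9 in Hnat.
    assert (P4 : 0 < 4 ^ k) by (apply pow_lt; lra).
    assert (P3 : 0 < 3 ^ k) by (apply pow_lt; lra).
    apply ln_le' in Hnat; [|apply Rmult_lt_0_compat; [auto|apply Rmult_lt_0_compat; lra]].
    rewrite !ln_mult in Hnat; try lra; try (apply Rmult_lt_0_compat; lra).
    rewrite !ln_pow in Hnat by lra.
    assert (H4 : ln 4 = 2 * ln 2).
    { replace 4 with (2 ^ 2) by (simpl; lra). rewrite ln_pow by lra. simpl. lra. }
    assert (H9 : ln 9 = 2 * ln 3).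
    { replace 9 with (3 ^ 2) by (simpl; lra). rewrite ln_pow by lra. simpl. lra. }
    assert (H35 : 5 * ln 3 <= 8 * ln 2).
    { assert (ln (3 ^ 5) <= ln (2 ^ 8)) by (apply ln_le'; simpl; lra).
      rewrite !ln_pow in H by lra. simpl in H. lra. }
    assert (H32 : ln 3 <= 2 * ln 2).
    { assert (ln 3 <= ln (2 ^ 2)) by (apply ln_le'; simpl; lra).
      rewrite ln_pow in H by lra. simpl in H. lra. }
    pose proof (pos_INR k) as Hk0.
    assert (Hkl : INR k * ln 3 <= INR k * (8/5 * ln 2)) by (apply Rmult_le_compat_l; lra).
    assert (Hfin : (2/5 * INR k - 3 - L) * ln 2 <= 0) by (rewrite H4, H9 in Hnat; lra).
    assert (2/5 * INR k - 3 - L <= 0).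
    { destruct (Rle_or_lt (2/5 * INR k - 3 - L) 0) as [h|h]; auto.
      exfalso. pose proof (Rmult_lt_0_compat _ _ h Hl2). lra. }
    rewrite plus_INR, S_INR. simpl (INR 1). lra.
Qed.

Theorem lemma3 :
  forall D : nat -> R, sqrt_bounded D ->
  exists c : R, 0 < c /\
    forall (t : gsat) (A B : R), exec D t A B -> A <= c * B.
Proof.
  intros D [HD _]. exists 300. split; [lra|].
  assert (Hmain : forall t A B, exec D t A B ->
     allnodes WFn t /\ sortedk (entries t) /\ A + INR (Phi t) <= 300 * B).
  { induction 1 as [|t A B o x t' cost Hex IH Hst].
    - split; [exact I|]. split; [constructor|]. simpl. lra.
    - destruct IH as [IW [IS IA]].
      destruct (step D o x t t' cost HD Hst IW IS) as [S1 [S2 [_ [_ [_ [_ [n [Sc Sb]]]]]]]].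
      split; [auto|]. split; [auto|].
      assert (Hb : INR (n + 1) <= 10 * (1 + log2 (INR (S (tm t)) / INR (S (acx t x))))).
      { apply real_bound; [apply acx_le_tm|].
        destruct n as [|k]; [left; auto|]. right. exists k. split; auto.
        cbn [nbound] in Sb. unfold Mx in Sb. tauto. }
      apply le_INR in Sc. rewrite !plus_INR, !mult_INR, !plus_INR in Sc.
      assert (E30 : INR 30 = 30) by (simpl; lra). rewrite E30 in Sc.
      rewrite plus_INR in Hb. simpl (INR 1) in *. lra. }
  intros t A B H. destruct (Hmain t A B H) as [_ [_ H1]]. pose proof (pos_INR (Phi t)). lra.
Qed.
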